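(* Let $(\mu^{(n)})$ be an almost-Berger sequence with regularity index $\mathrm{reg}(\mu^{(n)})\ge2$. Then for every integer $k\ge1$ there exists a constant $L_k>0$ such that $$|\mathrm{Rm}^k(\mu^{(n)})|_{\rm st}\le L_k\Big((\varepsilon^{(n)})^{1/2}+(\varepsilon^{(n)})^{-\frac{k+2}{2}}|\lambda_1^{(n)}-\lambda_2^{(n)}|\Big)\quad\text{for all }n\in\mathbb N.$$
   Context: Let $X_0=\begin{pmatrix}i&0\\0&-i\end{pmatrix}$, $X_1=\begin{pmatrix}0&-1\\1&0\end{pmatrix}$, $X_2=\begin{pmatrix}0&i\\i&0\end{pmatrix}$, a basis of $\mathfrak{su}(2)$ with $[X_0,X_1]=-2X_2$, $[X_0,X_2]=2X_1$, $[X_1,X_2]=-2X_0$. For $\varepsilon,\lambda_1,\lambda_2>0$ let $g$ be the left-invariant metric on $\mathsf{SU}(2)$ with $X_0,X_1,X_2$ pairwise orthogonal and $g(X_0,X_0)=\varepsilon$, $g(X_1,X_1)=\lambda_1$, $g(X_2,X_2)=\lambda_2$; identify the orthonormal basis $X_0/\sqrt\varepsilon,X_1/\sqrt{\lambda_1},X_2/\sqrt{\lambda_2}$ with the standard basis $(e_0,e_1,e_2)$ of $\mathbb R^3$, and let $\mu$ be the corresponding bracket on $\mathbb R^3$. With curvature convention $\mathrm{Rm}(X\wedge Y)=\nabla_{[X,Y]}-[\nabla_X,\nabla_Y]$, $\mathrm{Rm}^k(\mu):\bigotimes^k\mathbb R^3\otimes\Lambda^2\mathbb R^3\to\mathfrak{so}(3)$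 is the $k$-th covariant derivative of the curvature operator of $g$ at $e$ expressed in this basis, and $|\cdot|_{\rm st}$ is the standard Euclidean norm. An almost-Berger sequence is a sequence $(\mu^{(n)})$ of such brackets, with parameters $(\varepsilon^{(n)},\lambda_1^{(n)},\lambda_2^{(n)})$, such that $\varepsilon^{(n)}\to0$, $\lambda_i^{(n)}\to1$, and $|\lambda_1^{(n)}-\lambda_2^{(n)}|\le C\varepsilon^{(n)}$ for some $C>0$ and all $n$. Its regularity index is $\mathrm{reg}(\mu^{(n)})=\sup\{k\in\mathbb Z:(\varepsilon^{(n)})^{-k/2}|\lambda_1^{(n)}-\lambda_2^{(n)}|\to0\}\in\{1,2,\dots\}\cup\{+\infty\}$. *)

(* Defs.v *)
From Stdlib Require Import Reals Lra List ZArith.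
Import ListNotations.
Open Scope R_scope.

Definition sum3 (f : nat -> R) : R := f 0%nat + f 1%nat + f 2%nat.

(* Structure constants of su(2) in the basis X0,X1,X2:
   [X_i, X_j] = sum_k suC i j k X_k, with
   [X0,X1] = -2 X2, [X0,X2] = 2 X1, [X1,X2] = -2 X0. *)
Definition suC (i j k : nat) : R :=
  match i, j, k with
  | O, S O, S (S O) => -2 | S O, O, S (S O) => 2
  | O, S (S O), S O => 2  | S (S O), O, S O => -2
  | S O, S (S O), O => -2 | S (S O), S O, O => 2
  | _, _, _ => 0
  end.

Definition gdiag (eps l1 l2 : R) (i : nat) : R :=
  match i with 0%nat => eps | 1%nat => l1 | _ => l2 end.

(* The bracket mu on R^3 obtained by identifying e_i = X_i / sqrt(g(X_i,X_i)):
   mu(e_i, e_j) = sum_k muC i j k e_k. *)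
Definition muC (eps l1 l2 : R) (i j k : nat) : R :=
  suC i j k * sqrt (gdiag eps l1 l2 k)
  / (sqrt (gdiag eps l1 l2 i) * sqrt (gdiag eps l1 l2 j)).

(* Levi-Civita connection of the left-invariant metric (orthonormal basis e_i),
   Koszul formula: Gam i j k = < nabla_{e_i} e_j , e_k >
   = 1/2 ( <[e_i,e_j],e_k> - <[e_j,e_k],e_i> + <[e_k,e_i],e_j> ). *)
Definition Gam (eps l1 l2 : R) (i j k : nat) : R :=
  / 2 * (muC eps l1 l2 i j k - muC eps l1 l2 j k i + muC eps l1 l2 k i j).

(* Matrix of the endomorphism nabla_{e_i}: entry (p,q) = <nabla_{e_i} e_q, e_p>. *)
Definition NablaM (eps l1 l2 : R) (i p q : nat) : R := Gam eps l1 l2 i q p.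

(* Curvature operator Rm(e_a /\ e_b) = nabla_{mu(e_a,e_b)} - [nabla_{e_a}, nabla_{e_b}],
   as a 3x3 matrix, entry (p,q). *)
Definition RmM (eps l1 l2 : R) (a b p q : nat) : R :=
  sum3 (fun c => muC eps l1 l2 a b c * NablaM eps l1 l2 c p q)
  - (sum3 (fun r => NablaM eps l1 l2 a p r * NablaM eps l1 l2 b r q)
     - sum3 (fun r => NablaM eps l1 l2 b p r * NablaM eps l1 l2 a r q)).

(* A tensor  (R^3)^{(x) m} (x) (R^3 x R^3) -> End(R^3), in components:
   T ws a b p q = entry (p,q) of T(e_{ws_1},...,e_{ws_m}; e_a, e_b). *)
Definition tensor := list nat -> nat -> nat -> nat -> nat -> R.

Fixpoint pos_sum (eps l1 l2 : R) (w : nat) (G : list nat -> R)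
    (pre ws : list nat) : R :=
  match ws with
  | nil => 0
  | x :: rest =>
      sum3 (fun m => Gam eps l1 l2 w x m * G (pre ++ m :: rest))
      + pos_sum eps l1 l2 w G (pre ++ [x]) rest
  end.

(* Covariant derivative of a left-invariant tensor T in direction e_w:
   (nabla_w T)(ws; a, b) = [nabla_w, T(ws; a, b)] - sum T(.. nabla_w (ws_i) ..; a, b)
                          - T(ws; nabla_w e_a, e_b) - T(ws; e_a, nabla_w e_b). *)
Definition covD (eps l1 l2 : R) (T : tensor) (w : nat) (ws : list nat)
    (a b p q : nat) : R :=
  sum3 (fun r => NablaM eps l1 l2 w p r * T ws a b r q)
  - sum3 (fun r => T ws a b p r * NablaM eps l1 l2 w r q)
  - pos_sum eps l1 l2 w (fun vs => T vs a b p q) nil ws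
  - sum3 (fun m => Gam eps l1 l2 w a m * T ws m b p q)
  - sum3 (fun m => Gam eps l1 l2 w b m * T ws a m p q).

Fixpoint Rmk (eps l1 l2 : R) (k : nat) : tensor :=
  match k with
  | O => fun _ a b p q => RmM eps l1 l2 a b p q
  | S k' => fun ws a b p q =>
      match ws with
      | nil => 0
      | w :: ws' => covD eps l1 l2 (Rmk eps l1 l2 k') w ws' a b p q
      end
  end.

Fixpoint idx_lists (k : nat) : list (list nat) :=
  match k with
  | O => [nil]
  | S k' => flat_map (fun ws => map (fun i => i :: ws) [0%nat; 1%nat; 2%nat])
                     (idx_lists k')
  end.

Definition sumL (l : list (list nat)) (f : list nat -> R) : R :=
  fold_right (fun ws acc => f ws + acc) 0 l.

(* Sum over the orthonormal basis e_a /\ e_b (a < b) of Lambda^2 R^3. *)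
Definition sum_wedge (f : nat -> nat -> R) : R :=
  f 0%nat 1%nat + f 0%nat 2%nat + f 1%nat 2%nat.

(* Standard Euclidean norm of Rm^k(mu) in (R^3)^{(x)k} (x) Lambda^2 R^3 -> so(3)
   (square root of the sum of squares of all components w.r.t. the standard bases;
   so(3) carries the entrywise Euclidean structure of 3x3 matrices). *)
Definition Rmk_norm (eps l1 l2 : R) (k : nat) : R :=
  sqrt (sumL (idx_lists k) (fun ws =>
    sum_wedge (fun a b => sum3 (fun p => sum3 (fun q =>
      (Rmk eps l1 l2 k ws a b p q) ^ 2))))).

Definition almost_Berger (eps l1 l2 : nat -> R) : Prop :=
  (forall n, 0 < eps n /\ 0 < l1 n /\ 0 < l2 n) /\
  Un_cv eps 0 /\ Un_cv l1 1 /\ Un_cv l2 1 /\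
  exists C, 0 < C /\ forall n, Rabs (l1 n - l2 n) <= C * eps n.

(* k belongs to the set whose supremum is the regularity index. *)
Definition reg_set (eps l1 l2 : nat -> R) (k : Z) : Prop :=
  Un_cv (fun n => Rpower (eps n) (- IZR k / 2) * Rabs (l1 n - l2 n)) 0.

(* reg(mu^(n)) >= 2 : the supremum of the integer set reg_set is >= 2, i.e.
   (for a set of integers) it contains some k >= 2. *)
Definition reg_ge (eps l1 l2 : nat -> R) (m : Z) : Prop :=
  exists k : Z, (m <= k)%Z /\ reg_set eps l1 l2 k.

(* Main.v *)
Require Import Defs.
From Stdlib Require Import Reals ZArith Lra Lia List FunctionalExtensionality.
Import ListNotations.
Open Scope R_scope.


Fixpoint Pact (G : nat -> nat -> R) (F : list nat -> R) (l : list nat) : R :=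
  match l with
  | nil => 0
  | x :: r => sum3 (fun m => G x m * F (m :: r)) + Pact G (fun v => F (x :: v)) r
  end.

Lemma Pact_add G F1 F2 l :
  Pact G (fun v => F1 v + F2 v) l = Pact G F1 l + Pact G F2 l.
Proof.
  revert F1 F2; induction l as [|x r IH]; intros F1 F2; simpl.
  - ring.
  - rewrite (IH (fun v => F1 (x :: v)) (fun v => F2 (x :: v))).
    unfold sum3; ring.
Qed.

Lemma Pact_scal G c F l :
  Pact G (fun v => c * F v) l = c * Pact G F l.
Proof.
  revert F; induction l as [|x r IH]; intros F; simpl.
  - ring.
  - rewrite (IH (fun v => F (x :: v))). unfold sum3; ring.
Qed.

Lemma Pact_scalG G c F l :
  Pact (fun j m => c * G j m) F l = c * Pact G F l.
Proof.
  revert F; induction l as [|x r IH]; intros F; simpl.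
  - ring.
  - rewrite IH. unfold sum3; ring.
Qed.

Lemma Pact_extG G G' F l : (forall j m, G j m = G' j m) ->
  Pact G F l = Pact G' F l.
Proof.
  intros H; revert F; induction l as [|x r IH]; intros F; simpl; auto.
  rewrite IH. unfold sum3; rewrite !H; reflexivity.
Qed.

Lemma Pact_ext_len G F F' l :
  (forall v, length v = length l -> F v = F' v) -> Pact G F l = Pact G F' l.
Proof.
  revert F F'; induction l as [|x r IH]; intros F F' H; simpl; auto.
  rewrite (IH (fun v => F (x :: v)) (fun v => F' (x :: v))).
  - unfold sum3; rewrite !H by (simpl; auto); reflexivity.
  - intros v Hv; apply H; simpl; auto.
Qed.

Definition comm (G1 G2 : nat -> nat -> R) (j n : nat) : R :=
  sum3 (fun m => G1 j m * G2 m n) - sum3 (fun m => G2 j m * G1 m n).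

Lemma Pact_comm G1 G2 F l :
  Pact G1 (Pact G2 F) l - Pact G2 (Pact G1 F) l = Pact (comm G1 G2) F l.
Proof.
  revert F; induction l as [|x r IH]; intros F.
  - simpl; ring.
  - cbn [Pact]. unfold sum3 at 2 3 6 7.
    rewrite !Pact_add, !Pact_scal.
    rewrite <- (IH (fun u => F (x :: u))).
    unfold sum3, comm; cbn [Pact]. unfold sum3. ring.
Qed.


Definition E (w j m : nat) : R :=
  match w, j, m with
  | O, S O, S (S O) => -1 | O, S (S O), S O => 1
  | S O, O, S (S O) => 1 | S O, S (S O), O => -1
  | S (S O), O, S O => 1 | S (S O), S O, O => -1
  | _, _, _ => 0
  end.

Definition cf (x y z : R) (w : nat) : R :=
  match w with O => x + y - z | S O => x - y + z | S (S O) => x - y - z | _ => 0 end.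

Definition muX (x y z : R) (i j k : nat) : R :=
  match i, j, k with
  | O, S O, S (S O) => -2 * x | S O, O, S (S O) => 2 * x
  | O, S (S O), S O => 2 * y  | S (S O), O, S O => -2 * y
  | S O, S (S O), O => -2 * z | S (S O), S O, O => 2 * z
  | _, _, _ => 0
  end.

Definition Xf eps l1 l2 := sqrt l2 / (sqrt eps * sqrt l1).
Definition Yf eps l1 l2 := sqrt l1 / (sqrt eps * sqrt l2).
Definition Zf eps l1 l2 := sqrt eps / (sqrt l1 * sqrt l2).

Ltac dnat i := destruct i as [|[|[|i]]].

Lemma muC_X eps l1 l2 i j k : 0 < eps -> 0 < l1 -> 0 < l2 ->
  muC eps l1 l2 i j k = muX (Xf eps l1 l2) (Yf eps l1 l2) (Zf eps l1 l2) i j k.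
Proof.
  intros h0 h1 h2.
  assert (s0 : sqrt eps <> 0) by (apply Rgt_not_eq, sqrt_lt_R0; auto).
  assert (s1 : sqrt l1 <> 0) by (apply Rgt_not_eq, sqrt_lt_R0; auto).
  assert (s2 : sqrt l2 <> 0) by (apply Rgt_not_eq, sqrt_lt_R0; auto).
  unfold muC, muX, Xf, Yf, Zf, suC, gdiag.
  dnat i; dnat j; dnat k; field; auto.
Qed.

Lemma E_anti w j m : E w j m = - E w m j.
Proof. unfold E; dnat w; dnat j; dnat m; lra. Qed.

Lemma E_bnd w j m : Rabs (E w j m) <= 1.
Proof. unfold E; dnat w; dnat j; dnat m; unfold Rabs; destruct Rcase_abs; lra. Qed.

Lemma Gam_E eps l1 l2 w j m : 0 < eps -> 0 < l1 -> 0 < l2 ->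
  Gam eps l1 l2 w j m = cf (Xf eps l1 l2) (Yf eps l1 l2) (Zf eps l1 l2) w * E w j m.
Proof.
  intros h0 h1 h2. unfold Gam. rewrite !muC_X by auto.
  generalize (Xf eps l1 l2) (Yf eps l1 l2) (Zf eps l1 l2); intros x y z.
  unfold muX, cf, E. dnat w; dnat j; dnat m; lra.
Qed.

Definition RmE (x y z : R) (a b p q : nat) : R :=
  sum3 (fun c => muX x y z a b c * (cf x y z c * E c q p))
  - (sum3 (fun r => (cf x y z a * E a r p) * (cf x y z b * E b q r))
     - sum3 (fun r => (cf x y z b * E b r p) * (cf x y z a * E a q r))).

Lemma RmM_E eps l1 l2 a b p q : 0 < eps -> 0 < l1 -> 0 < l2 ->
  RmM eps l1 l2 a b p q = RmE (Xf eps l1 l2) (Yf eps l1 l2) (Zf eps l1 l2) a b p q.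
Proof.
  intros h0 h1 h2. unfold RmM, RmE, NablaM, sum3.
  rewrite !Gam_E by auto. rewrite !muC_X by auto. reflexivity.
Qed.

Fixpoint Fk (x y z : R) (k : nat) (l : list nat) : R :=
  match k with
  | O => match l with [a; b; p; q] => RmE x y z a b p q | _ => 0 end
  | S k' => match l with nil => 0 | w :: l' => - cf x y z w * Pact (E w) (Fk x y z k') l' end
  end.

Lemma pos_sum_Pact eps l1 l2 w F pre ws :
  pos_sum eps l1 l2 w F pre ws = Pact (Gam eps l1 l2 w) (fun v => F (pre ++ v)) ws.
Proof.
  revert pre; induction ws as [|x r IH]; intros pre; simpl; auto.
  rewrite IH. f_equal. apply Pact_ext_len. intros v _.
  rewrite <- app_assoc. reflexivity.
Qed.

Lemma Pact_app G F l1 l2 :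
  Pact G F (l1 ++ l2) = Pact G (fun v => F (v ++ l2)) l1 + Pact G (fun v => F (l1 ++ v)) l2.
Proof.
  revert F; induction l1 as [|x r IH]; intros F; simpl.
  - rewrite Rplus_0_l; reflexivity.
  - rewrite IH. ring.
Qed.

Lemma covD_Pact eps l1 l2 (T : tensor) F n w ws a b p q :
  0 < eps -> 0 < l1 -> 0 < l2 ->
  (forall vs a b p q, length vs = n -> T vs a b p q = F (vs ++ [a; b; p; q])) ->
  length ws = n ->
  covD eps l1 l2 T w ws a b p q =
  - cf (Xf eps l1 l2) (Yf eps l1 l2) (Zf eps l1 l2) w * Pact (E w) F (ws ++ [a; b; p; q]).
Proof.
  intros h0 h1 h2 HT Hl.
  unfold covD. rewrite pos_sum_Pact.
  rewrite (Pact_extG _ (fun j m => cf (Xf eps l1 l2) (Yf eps l1 l2) (Zf eps l1 l2) w * E w j m))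
    by (intros; apply Gam_E; auto).
  rewrite Pact_scalG, Pact_app.
  rewrite (Pact_ext_len _ (fun v => F (v ++ [a; b; p; q])) (fun v => T v a b p q)).
  2:{ intros v Hv. rewrite HT; auto. lia. }
  cbn [Pact app]. unfold NablaM, sum3. rewrite !Gam_E by auto.
  rewrite <- !HT by auto.
  rewrite (E_anti w 0 p), (E_anti w 1 p), (E_anti w 2 p).
  simpl. ring.
Qed.

Lemma Rmk_Fk eps l1 l2 k ws a b p q : 0 < eps -> 0 < l1 -> 0 < l2 ->
  length ws = k ->
  Rmk eps l1 l2 k ws a b p q = Fk (Xf eps l1 l2) (Yf eps l1 l2) (Zf eps l1 l2) k (ws ++ [a; b; p; q]).
Proof.
  intros h0 h1 h2. revert ws a b p q; induction k as [|k IH]; intros ws a b p q Hl.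
  - destruct ws; [|simpl in Hl; lia]. simpl. apply RmM_E; auto.
  - destruct ws as [|w ws]; [simpl in Hl; lia|]. simpl in Hl.
    simpl Rmk. rewrite (covD_Pact eps l1 l2 _ (Fk (Xf eps l1 l2) (Yf eps l1 l2) (Zf eps l1 l2) k) k);
      auto.
Qed.


Definition S0 x y z := Rabs (x - y) * (Rabs x + Rabs y + Rabs z) + Rabs (x * z) + Rabs (y * z) + z * z.
Definition S1 x y z := Rabs (x - y) * (Rabs x + Rabs y + Rabs z).

Lemma absmul c t K : Rabs c <= K -> Rabs (c * t) <= K * Rabs t.
Proof. intros H; rewrite Rabs_mult; apply Rmult_le_compat_r; auto; apply Rabs_pos. Qed.

Lemma tri3 a b c : Rabs (a + b + c) <= Rabs a + Rabs b + Rabs c.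
Proof. eapply Rle_trans; [apply Rabs_triang|]. assert (h := Rabs_triang a b). lra. Qed.
Lemma tri5 a b c d e : Rabs (a + b + c + d + e) <= Rabs a + Rabs b + Rabs c + Rabs d + Rabs e.
Proof.
  eapply Rle_trans; [apply Rabs_triang|]. assert (h := tri3 a b c). assert (h2 := Rabs_triang (a+b+c) d). lra.
Qed.

Lemma quadA (f : R -> R -> R -> R) :
 (forall x y z, f x y z = f 1 0 0 * (x*x) + (f 1 1 0 - f 1 0 0 - f 0 1 0)*(x*y) + f 0 1 0*(y*y)
    + (f 1 0 1 - f 1 0 0 - f 0 0 1)*(x*z) + (f 0 1 1 - f 0 1 0 - f 0 0 1)*(y*z) + f 0 0 1*(z*z)) ->
 f 1 1 0 = 0 -> Rabs (f 1 0 0) <= 10 -> Rabs (f 0 1 0) <= 10 -> Rabs (f 0 0 1) <= 10 ->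
 Rabs (f 1 0 1) <= 10 -> Rabs (f 0 1 1) <= 10 ->
 forall x y z, Rabs (f x y z) <= 30 * S0 x y z.
Proof.
  intros Hf H0 h1 h2 h3 h4 h5 x y z.
  set (A := f 1 0 0) in *. set (B := f 0 1 0) in *. set (C0 := f 0 0 1) in *.
  set (P := f 1 0 1) in *. set (Q := f 0 1 1) in *.
  assert (e : f x y z = A*(x*(x-y)) + (-B)*(y*(x-y)) + (P-A-C0)*(x*z) + (Q-B-C0)*(y*z) + C0*(z*z)).
  { rewrite Hf, H0. unfold A, B, C0, P, Q. ring. }
  rewrite e. unfold S0.
  assert (a1 := absmul A (x*(x-y)) 10 h1).
  assert (a2 := absmul (-B) (y*(x-y)) 10 ltac:(rewrite Rabs_Ropp; auto)).
  assert (a3 := absmul (P-A-C0) (x*z) 30 ltac:(unfold Rminus; eapply Rle_trans; [apply Rabs_triang|];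
     eapply Rle_trans; [apply Rplus_le_compat_r, Rabs_triang|]; rewrite !Rabs_Ropp; lra)).
  assert (a4 := absmul (Q-B-C0) (y*z) 30 ltac:(unfold Rminus; eapply Rle_trans; [apply Rabs_triang|];
     eapply Rle_trans; [apply Rplus_le_compat_r, Rabs_triang|]; rewrite !Rabs_Ropp; lra)).
  assert (a5 := absmul C0 (z*z) 10 h3).
  rewrite !Rabs_mult in a1, a2, a3, a4, a5.
  assert (zz : Rabs z * Rabs z = z * z) by (rewrite <- Rabs_mult; apply Rabs_pos_eq; nra).
  assert (p1 := Rabs_pos x). assert (p2 := Rabs_pos y). assert (p3 := Rabs_pos z).
  assert (p4 := Rabs_pos (x-y)). assert (p5 := Rabs_pos (x*z)). assert (p6 := Rabs_pos (y*z)).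
  assert (p7 : 0 <= Rabs (x-y) * Rabs z) by (apply Rmult_le_pos; auto).
  assert (p8 : 0 <= z*z) by nra.
  rewrite zz in a5. rewrite !Rabs_mult in p5, p6.
  eapply Rle_trans; [apply tri5|]. rewrite !Rabs_mult. rewrite zz. nra.
Qed.

Lemma quadB (f : R -> R -> R -> R) :
 (forall x y z, f x y z = f 1 0 0 * (x*x) + (f 1 1 0 - f 1 0 0 - f 0 1 0)*(x*y) + f 0 1 0*(y*y)
    + (f 1 0 1 - f 1 0 0 - f 0 0 1)*(x*z) + (f 0 1 1 - f 0 1 0 - f 0 0 1)*(y*z) + f 0 0 1*(z*z)) ->
 f 1 1 0 = 0 -> f 0 0 1 = 0 -> f 1 0 1 + f 0 1 1 - f 1 0 0 - f 0 1 0 = 0 ->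
 Rabs (f 1 0 0) <= 10 -> Rabs (f 0 1 0) <= 10 -> Rabs (f 1 0 1) <= 10 ->
 forall x y z, Rabs (f x y z) <= 20 * S1 x y z.
Proof.
  intros Hf H0 H1 H2 h1 h2 h4 x y z.
  set (A := f 1 0 0) in *. set (B := f 0 1 0) in *.
  set (P := f 1 0 1) in *.
  assert (e : f x y z = (x - y) * (A * x + (-B) * y + (P - A) * z)).
  { rewrite Hf, H0, H1. unfold A, B, P. 
    replace (f 0 1 1) with (f 1 0 0 + f 0 1 0 - f 1 0 1) by (unfold A, B, P in H2; lra). ring. }
  rewrite e. unfold S1. rewrite Rabs_mult, <- Rmult_assoc, (Rmult_comm 20), Rmult_assoc. apply Rmult_le_compat_l; [apply Rabs_pos|].
  assert (a1 := absmul A x 10 h1).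
  assert (a2 := absmul (-B) y 10 ltac:(rewrite Rabs_Ropp; auto)).
  assert (a3 := absmul (P - A) z 20 ltac:(unfold Rminus; eapply Rle_trans; [apply Rabs_triang|];
      rewrite Rabs_Ropp; lra)).
  assert (p3 := Rabs_pos z). assert (p1 := Rabs_pos x). assert (p2 := Rabs_pos y).
  eapply Rle_trans; [apply tri3|]. lra.
Qed.



Ltac ab := unfold Rabs; destruct Rcase_abs; lra.
Definition quadF (f : R -> R -> R -> R) := forall x y z, f x y z = f 1 0 0 * (x*x) + (f 1 1 0 - f 1 0 0 - f 0 1 0)*(x*y) + f 0 1 0*(y*y)
    + (f 1 0 1 - f 1 0 0 - f 0 0 1)*(x*z) + (f 0 1 1 - f 0 1 0 - f 0 0 1)*(y*z) + f 0 0 1*(z*z).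
Definition linF (g : R -> R -> R -> R) := forall x y z, g x y z = g 1 0 0 * x + g 0 1 0 * y + g 0 0 1 * z.

Lemma lin_mul g h : linF g -> linF h -> quadF (fun x y z => g x y z * h x y z).
Proof.
  intros Hg Hh x y z. rewrite (Hg x y z), (Hh x y z), (Hg 1 1 0), (Hh 1 1 0), (Hg 1 0 1), (Hh 1 0 1),
    (Hg 0 1 1), (Hh 0 1 1), (Hg 1 0 0), (Hh 1 0 0), (Hg 0 1 0), (Hh 0 1 0), (Hg 0 0 1), (Hh 0 0 1).
  ring.
Qed.

Lemma lin_scal c g : linF g -> linF (fun x y z => c * g x y z).
Proof. intros Hg x y z. rewrite (Hg x y z). ring. Qed.
Lemma lin_scalr c g : linF g -> linF (fun x y z => g x y z * c).
Proof. intros Hg x y z. rewrite (Hg x y z). ring. Qed.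

Lemma quad_add f g : quadF f -> quadF g -> quadF (fun x y z => f x y z + g x y z).
Proof. intros Hf Hg x y z. rewrite (Hf x y z), (Hg x y z). ring. Qed.
Lemma quad_sub f g : quadF f -> quadF g -> quadF (fun x y z => f x y z - g x y z).
Proof. intros Hf Hg x y z. rewrite (Hf x y z), (Hg x y z). ring. Qed.
Lemma quad_opp f : quadF f -> quadF (fun x y z => - f x y z).
Proof. intros Hf x y z. rewrite (Hf x y z). ring. Qed.
Lemma quad_scal c f : quadF f -> quadF (fun x y z => c * f x y z).
Proof. intros Hf x y z. rewrite (Hf x y z). ring. Qed.


Lemma lin_muX a b c : linF (fun x y z => muX x y z a b c).
Proof. intros x y z; unfold muX; dnat a; dnat b; dnat c; ring. Qed.
Lemma lin_cf w : linF (fun x y z => cf x y z w).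
Proof. intros x y z; unfold cf; dnat w; ring. Qed.

Lemma quad_RmE a b p q : quadF (fun x y z => RmE x y z a b p q).
Proof.
  unfold RmE, sum3.
  repeat first [apply quad_sub | apply quad_add | apply quad_opp].
  all: first [ apply lin_mul; [apply lin_muX | apply lin_scalr, lin_cf]
             | apply lin_mul; apply lin_scalr, lin_cf ].
Qed.

Lemma quad_zero : quadF (fun _ _ _ => 0).
Proof. intros x y z; ring. Qed.

Lemma quad_B0 a b p q : quadF (fun x y z => Pact (E 0) (Fk x y z 0) [a; b; p; q]).
Proof.
  cbn [Pact]. unfold sum3. cbn [Fk].
  repeat first [apply quad_RmE | apply quad_sub | apply quad_add | apply quad_opp | apply quad_zero | apply quad_scal].
Qed.


Lemma E_out w j m : (3 <= w)%nat \/ (3 <= j)%nat \/ (3 <= m)%nat -> E w j m = 0.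
Proof. intros H. unfold E. dnat w; dnat j; dnat m; try reflexivity; exfalso; lia. Qed.
Lemma cf_out x y z w : (3 <= w)%nat -> cf x y z w = 0.
Proof. intros H. unfold cf. dnat w; try reflexivity; exfalso; lia. Qed.
Lemma muX_out x y z a b c : (3 <= a)%nat \/ (3 <= b)%nat -> muX x y z a b c = 0.
Proof. intros H. unfold muX. dnat a; dnat b; dnat c; try reflexivity; exfalso; lia. Qed.

Lemma RmE_out x y z a b p q : (3 <= a)%nat \/ (3 <= b)%nat \/ (3 <= p)%nat \/ (3 <= q)%nat ->
  RmE x y z a b p q = 0.
Proof.
  intros H. unfold RmE, sum3.
  destruct H as [H|[H|[H|H]]].
  - rewrite !(muX_out x y z a) by auto. rewrite !(cf_out x y z a) by auto. ring.
  - rewrite !(muX_out x y z a b) by auto. rewrite !(cf_out x y z b) by auto. ring.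
  - rewrite !(E_out _ _ p) by auto. ring.
  - rewrite !(E_out _ q) by auto. ring.
Qed.

Lemma idx3 a : (3 <= a)%nat \/ a = 0%nat \/ a = 1%nat \/ a = 2%nat.
Proof. lia. Qed.

Lemma S0_pos x y z : 0 <= S0 x y z.
Proof.
  unfold S0. assert (h1 := Rabs_pos (x-y)). assert (h2 := Rabs_pos x). assert (h3 := Rabs_pos y).
  assert (h4 := Rabs_pos z). assert (h5 := Rabs_pos (x*z)). assert (h6 := Rabs_pos (y*z)).
  assert (0 <= z*z) by nra. assert (0 <= Rabs (x-y) * (Rabs x + Rabs y + Rabs z)) by (apply Rmult_le_pos; lra).
  lra.
Qed.
Lemma S1_pos x y z : 0 <= S1 x y z.
Proof.
  unfold S1. assert (h1 := Rabs_pos (x-y)). assert (h2 := Rabs_pos x). assert (h3 := Rabs_pos y).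
  assert (h4 := Rabs_pos z). apply Rmult_le_pos; lra.
Qed.



Lemma baseA a b p q x y z : Rabs (RmE x y z a b p q) <= 30 * S0 x y z.
Proof.
  destruct (idx3 a) as [Ha|Ha]; [rewrite RmE_out by auto; rewrite Rabs_R0; assert (h := S0_pos x y z); lra|].
  destruct (idx3 b) as [Hb|Hb]; [rewrite RmE_out by auto; rewrite Rabs_R0; assert (h := S0_pos x y z); lra|].
  destruct (idx3 p) as [Hp|Hp]; [rewrite RmE_out by auto; rewrite Rabs_R0; assert (h := S0_pos x y z); lra|].
  destruct (idx3 q) as [Hq|Hq]; [rewrite RmE_out by auto; rewrite Rabs_R0; assert (h := S0_pos x y z); lra|].
  apply (quadA (fun x y z => RmE x y z a b p q)); [apply quad_RmE|..];
  destruct Ha as [ -> | [ -> | -> ] ]; destruct Hb as [ -> | [ -> | -> ] ]; destruct Hp as [ -> | [ -> | -> ] ]; destruct Hq as [ -> | [ -> | -> ] ];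
  cbv beta iota delta [RmE sum3 muX cf E];
  solve [lra | ab].
Qed.

Lemma B0_out x y z a b p q : (3 <= a)%nat \/ (3 <= b)%nat \/ (3 <= p)%nat \/ (3 <= q)%nat ->
  Pact (E 0) (Fk x y z 0) [a; b; p; q] = 0.
Proof.
  intros H. cbn [Pact]. unfold sum3. cbn [Fk].
  destruct H as [H|[H|[H|H]]].
  - rewrite !(E_out 0 a) by auto. rewrite !(RmE_out x y z a) by auto. ring.
  - rewrite !(E_out 0 b) by auto. rewrite !(RmE_out x y z _ b) by auto. ring.
  - rewrite !(E_out 0 p) by auto. rewrite !(RmE_out x y z _ _ p) by auto. ring.
  - rewrite !(E_out 0 q) by auto. rewrite !(RmE_out x y z _ _ _ q) by auto. ring.
Qed.

Lemma baseB a b p q x y z : Rabs (Pact (E 0) (Fk x y z 0) [a; b; p; q]) <= 20 * S1 x y z.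
Proof.
  destruct (idx3 a) as [Ha|Ha]; [rewrite B0_out by auto; rewrite Rabs_R0; assert (h := S1_pos x y z); lra|].
  destruct (idx3 b) as [Hb|Hb]; [rewrite B0_out by auto; rewrite Rabs_R0; assert (h := S1_pos x y z); lra|].
  destruct (idx3 p) as [Hp|Hp]; [rewrite B0_out by auto; rewrite Rabs_R0; assert (h := S1_pos x y z); lra|].
  destruct (idx3 q) as [Hq|Hq]; [rewrite B0_out by auto; rewrite Rabs_R0; assert (h := S1_pos x y z); lra|].
  apply (quadB (fun x y z => Pact (E 0) (Fk x y z 0) [a; b; p; q])); [apply quad_B0|..];
  destruct Ha as [ -> | [ -> | -> ] ]; destruct Hb as [ -> | [ -> | -> ] ]; destruct Hp as [ -> | [ -> | -> ] ]; destruct Hq as [ -> | [ -> | -> ] ];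
  cbn [Pact Fk]; cbv beta iota delta [RmE sum3 muX cf E];
  solve [lra | ab].
Qed.


Definition Bnd (n : nat) (F : list nat -> R) (M : R) := forall l, length l = n -> Rabs (F l) <= M.

Lemma mul_bnd g f M : Rabs g <= 1 -> Rabs f <= M -> Rabs (g * f) <= M.
Proof.
  intros h1 h2. rewrite Rabs_mult. assert (0 <= Rabs g) by apply Rabs_pos.
  assert (0 <= Rabs f) by apply Rabs_pos. nra.
Qed.

Lemma sum3_bnd (h : nat -> R) M : (forall m, Rabs (h m) <= M) -> Rabs (sum3 h) <= 3 * M.
Proof.
  intros H. unfold sum3. assert (a0 := H 0%nat). assert (a1 := H 1%nat). assert (a2 := H 2%nat).
  eapply Rle_trans; [apply Rabs_triang|]. assert (t := Rabs_triang (h 0%nat) (h 1%nat)). lra.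
Qed.

Lemma Pact_bnd G F n M : (forall j m, Rabs (G j m) <= 1) -> Bnd n F M ->
  Bnd n (Pact G F) (3 * INR n * M).
Proof.
  intros HG HF0. revert F HF0. induction n as [|n IH]; intros F HF l Hl.
  - destruct l; [|simpl in Hl; lia]. simpl. rewrite Rabs_R0. lra.
  - destruct l as [|x r]; [simpl in Hl; lia|]. simpl in Hl. injection Hl as Hl.
    simpl Pact.
    assert (h1 : Rabs (sum3 (fun m => G x m * F (m :: r))) <= 3 * M).
    { apply sum3_bnd. intros m. apply mul_bnd; auto. apply HF. simpl; lia. }
    assert (h2 : Rabs (Pact G (fun v => F (x :: v)) r) <= 3 * INR n * M).
    { apply IH; auto. intros v Hv. apply HF. simpl; lia. }
    eapply Rle_trans; [apply Rabs_triang|]. rewrite S_INR. lra.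
Qed.

Lemma comm00 j m : comm (E 0) (E 0) j m = 0 * E 0 j m.
Proof. unfold comm, sum3, E. destruct j as [|[|[|j]]]; destruct m as [|[|[|m]]]; lra. Qed.
Lemma comm01 j m : comm (E 0) (E 1) j m = -1 * E 2 j m.
Proof. unfold comm, sum3, E. destruct j as [|[|[|j]]]; destruct m as [|[|[|m]]]; lra. Qed.
Lemma comm02 j m : comm (E 0) (E 2) j m = 1 * E 1 j m.
Proof. unfold comm, sum3, E. destruct j as [|[|[|j]]]; destruct m as [|[|[|m]]]; lra. Qed.

Lemma Pact_comm' w F l : Pact (E 0) (fun v => Pact (E w) F v) l =
   Pact (E w) (Pact (E 0) F) l + Pact (comm (E 0) (E w)) F l.
Proof. assert (h := Pact_comm (E 0) (E w) F l). change (fun v => Pact (E w) F v) with (Pact (E w) F). lra. Qed.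

Lemma sE00 h : sum3 (fun m => E 0 0 m * h m) = 0.
Proof. unfold sum3, E; ring. Qed.
Lemma sE01 h : sum3 (fun m => E 0 1 m * h m) = - h 2%nat.
Proof. unfold sum3, E; ring. Qed.
Lemma sE02 h : sum3 (fun m => E 0 2 m * h m) = h 1%nat.
Proof. unfold sum3, E; ring. Qed.
Lemma sE03 w h : sum3 (fun m => E 0 (S (S (S w))) m * h m) = 0.
Proof. unfold sum3, E; ring. Qed.
Section Steps.
Lemma stepA x y z k al be t s :
  0 <= al -> 0 <= be ->
  Bnd (k+4) (Fk x y z k) al -> Bnd (k+4) (Pact (E 0) (Fk x y z k)) be ->
  Rabs (cf x y z 0) <= t -> Rabs (cf x y z 1) <= s -> Rabs (cf x y z 2) <= s ->
  Bnd (S k + 4) (Fk x y z (S k)) (t * be + s * (3 * INR (k+4) * al)).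
Proof.
  intros hal hbe HA HB h0 h1 h2 l Hl.
  assert (t0 : 0 <= t) by (eapply Rle_trans; [apply Rabs_pos|apply h0]).
  assert (s0 : 0 <= s) by (eapply Rle_trans; [apply Rabs_pos|apply h1]).
  assert (PA := Pact_bnd (E 1) _ _ _ (E_bnd 1) HA).
  assert (PA2 := Pact_bnd (E 2) _ _ _ (E_bnd 2) HA).
  assert (N0 : 0 <= 3 * INR (k+4) * al) by (apply Rmult_le_pos; [|auto]; apply Rmult_le_pos; [lra|apply pos_INR]).
  destruct l as [|w l]; [simpl in Hl; lia|]. simpl in Hl. injection Hl as Hl.
  simpl Fk. rewrite Rabs_mult, Rabs_Ropp.
  destruct w as [|[|[|w]]].
  - assert (q := HB l Hl). assert (0 <= Rabs (Pact (E 0) (Fk x y z k) l)) by apply Rabs_pos.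
    assert (0 <= s * (3 * INR (k + 4) * al)) by (apply Rmult_le_pos; auto). nra.
  - assert (q := PA l Hl). assert (0 <= Rabs (Pact (E 1) (Fk x y z k) l)) by apply Rabs_pos.
    assert (0 <= t * be) by (apply Rmult_le_pos; auto). nra.
  - assert (q := PA2 l Hl). assert (0 <= Rabs (Pact (E 2) (Fk x y z k) l)) by apply Rabs_pos.
    assert (0 <= t * be) by (apply Rmult_le_pos; auto). nra.
  - unfold cf. rewrite Rabs_R0, Rmult_0_l.
    assert (0 <= s * (3 * INR (k + 4) * al)) by (apply Rmult_le_pos; auto).
    assert (0 <= t * be) by (apply Rmult_le_pos; auto). lra.
Qed.

Lemma stepB x y z k al be t s u :
  0 <= al -> 0 <= be ->
  Bnd (k+4) (Fk x y z k) al -> Bnd (k+4) (Pact (E 0) (Fk x y z k)) be ->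
  Rabs (cf x y z 0) <= t -> Rabs (cf x y z 1) <= s -> Rabs (cf x y z 2) <= s ->
  Rabs (cf x y z 1 + cf x y z 2) <= u ->
  Bnd (S k + 4) (Pact (E 0) (Fk x y z (S k))) (3 * INR (k+4) * (t * be + u * al + s * be)).
Proof.
  intros hal hbe HA HB h0 h1 h2 h3 l Hl.
  assert (t0 : 0 <= t) by (eapply Rle_trans; [apply Rabs_pos|apply h0]).
  assert (s0 : 0 <= s) by (eapply Rle_trans; [apply Rabs_pos|apply h1]).
  assert (u0 : 0 <= u) by (eapply Rle_trans; [apply Rabs_pos|apply h3]).
  set (N := 3 * INR (k+4)).
  assert (N0 : 0 <= N) by (unfold N; apply Rmult_le_pos; [lra|apply pos_INR]).
  assert (PA1 := Pact_bnd (E 1) _ _ _ (E_bnd 1) HA).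
  assert (PA2 := Pact_bnd (E 2) _ _ _ (E_bnd 2) HA).
  assert (PB0 := Pact_bnd (E 0) _ _ _ (E_bnd 0) HB).
  assert (PB1 := Pact_bnd (E 1) _ _ _ (E_bnd 1) HB).
  assert (PB2 := Pact_bnd (E 2) _ _ _ (E_bnd 2) HB).
  fold N in PA1, PA2, PB0, PB1, PB2.
  destruct l as [|w l]; [simpl in Hl; lia|]. simpl in Hl. injection Hl as Hl.
  specialize (PA1 l Hl). specialize (PA2 l Hl). specialize (PB0 l Hl). specialize (PB1 l Hl).
  specialize (PB2 l Hl).
  assert (Nb : 0 <= N * be) by (apply Rmult_le_pos; auto).
  assert (Na : 0 <= N * al) by (apply Rmult_le_pos; auto).
  cbn [Pact Fk]. rewrite Pact_scal, Pact_comm'.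
  destruct w as [|[|[|w]]].
  - rewrite (Pact_extG _ _ _ _ comm00), Pact_scalG, sE00.
    replace (0 + - cf x y z 0 * (Pact (E 0) (Pact (E 0) (Fk x y z k)) l + 0 * Pact (E 0) (Fk x y z k) l))
     with (- cf x y z 0 * Pact (E 0) (Pact (E 0) (Fk x y z k)) l) by ring.
    rewrite Rabs_mult, Rabs_Ropp.
    assert (0 <= Rabs (Pact (E 0) (Pact (E 0) (Fk x y z k)) l)) by apply Rabs_pos.
    assert (0 <= u * al /\ 0 <= s * be) as [? ?] by (split; apply Rmult_le_pos; auto).
    nra.
  - rewrite (Pact_extG _ _ _ _ comm01), Pact_scalG, sE01.
    replace (- (- cf x y z 2 * Pact (E 2) (Fk x y z k) l) +
       - cf x y z 1 * (Pact (E 1) (Pact (E 0) (Fk x y z k)) l + -1 * Pact (E 2) (Fk x y z k) l))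
     with ((cf x y z 1 + cf x y z 2) * Pact (E 2) (Fk x y z k) l
           + (- cf x y z 1) * Pact (E 1) (Pact (E 0) (Fk x y z k)) l) by ring.
    eapply Rle_trans; [apply Rabs_triang|]. rewrite !Rabs_mult, Rabs_Ropp.
    assert (0 <= Rabs (Pact (E 1) (Pact (E 0) (Fk x y z k)) l)) by apply Rabs_pos.
    assert (0 <= Rabs (Pact (E 2) (Fk x y z k) l)) by apply Rabs_pos.
    assert (0 <= t * be) by (apply Rmult_le_pos; auto).
    nra.
  - rewrite (Pact_extG _ _ _ _ comm02), Pact_scalG, sE02.
    replace (- cf x y z 1 * Pact (E 1) (Fk x y z k) l +
       - cf x y z 2 * (Pact (E 2) (Pact (E 0) (Fk x y z k)) l + 1 * Pact (E 1) (Fk x y z k) l))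
     with (- (cf x y z 1 + cf x y z 2) * Pact (E 1) (Fk x y z k) l
           + (- cf x y z 2) * Pact (E 2) (Pact (E 0) (Fk x y z k)) l) by ring.
    eapply Rle_trans; [apply Rabs_triang|]. rewrite !Rabs_mult, !Rabs_Ropp.
    assert (0 <= Rabs (Pact (E 2) (Pact (E 0) (Fk x y z k)) l)) by apply Rabs_pos.
    assert (0 <= Rabs (Pact (E 1) (Fk x y z k) l)) by apply Rabs_pos.
    assert (0 <= t * be) by (apply Rmult_le_pos; auto).
    nra.
  - rewrite sE03. unfold cf at 1. 
    replace (0 + - 0 * (Pact (E (S (S (S w)))) (Pact (E 0) (Fk x y z k)) l + Pact (comm (E 0) (E (S (S (S w))))) (Fk x y z k) l))
     with 0 by ring.
    rewrite Rabs_R0.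
    assert (0 <= u * al /\ 0 <= s * be /\ 0 <= t * be) as [? [? ?]] by (repeat split; apply Rmult_le_pos; auto).
    apply Rmult_le_pos; auto; lra.
Qed.
End Steps.


Definition good C x y z a D :=
  0 < a /\ a <= 1 /\ 0 <= D /\ D <= C /\
  Rabs (cf x y z 0) <= 12 * / a /\ Rabs (cf x y z 1) <= 4 * (C + 1) * a /\
  Rabs (cf x y z 2) <= 4 * (C + 1) * a /\ Rabs (cf x y z 1 + cf x y z 2) <= 8 * D * a /\
  S0 x y z <= 24 + 48 * C /\ S1 x y z <= 48 * D.

Lemma Bnd_mono n F M M' : Bnd n F M -> M <= M' -> Bnd n F M'.
Proof. intros H h l Hl. eapply Rle_trans; [apply H; auto|auto]. Qed.

Lemma base0A x y z : Bnd 4 (Fk x y z 0) (30 * S0 x y z).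
Proof.
  intros l Hl. destruct l as [|a [|b [|p [|q [|r l]]]]]; simpl in Hl; try lia.
  simpl. apply baseA.
Qed.

Lemma base0B x y z : Bnd 4 (Pact (E 0) (Fk x y z 0)) (20 * S1 x y z).
Proof.
  intros l Hl. destruct l as [|a [|b [|p [|q [|r l]]]]]; simpl in Hl; try lia.
  apply baseB.
Qed.

Lemma main_k C : 0 <= C -> forall k, (1 <= k)%nat -> exists U V, 0 <= U /\ 0 <= V /\
  forall x y z a D, good C x y z a D ->
    Bnd (k+4) (Fk x y z k) (U * (a + D * (/ a) ^ k)) /\
    Bnd (k+4) (Pact (E 0) (Fk x y z k)) (V * D * (/ a) ^ k).
Proof.
  intros HC k Hk. induction k as [|k IH]; [lia|].
  destruct k as [|k].
  -
    set (U0 := 30 * (24 + 48 * C)).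
    assert (U0p : 0 <= U0) by (unfold U0; lra).
    exists (11520 + 48 * (C + 1) * U0), (12 * (11520 + 8 * U0 + 3840 * (C + 1))).
    split; [nra|]. split; [nra|].
    intros x y z a D (ha & ha1 & hD & hDC & h0 & h1 & h2 & h3 & h4 & h5).
    assert (BA : Bnd (0+4) (Fk x y z 0) U0).
    { eapply Bnd_mono; [apply base0A|]. unfold U0; lra. }
    assert (BB : Bnd (0+4) (Pact (E 0) (Fk x y z 0)) (960 * D)).
    { eapply Bnd_mono; [apply base0B|]. lra. }
    assert (ia1 : 1 <= / a) by (rewrite <- Rinv_1; apply Rinv_le_contravar; lra).
    assert (aia : a * / a = 1) by (field; lra).
    simpl (1 + 4)%nat.
    split.
    + eapply Bnd_mono; [apply (stepA x y z 0 U0 (960 * D) (12 * / a) (4 * (C + 1) * a)); auto; lra|].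
      simpl INR. simpl pow. 
      assert (0 <= D * / a) by (apply Rmult_le_pos; lra).
      assert (0 <= (C + 1) * U0 * (D * / a)) by (apply Rmult_le_pos; [nra|auto]).
      assert (0 <= (C + 1) * U0 * a) by (apply Rmult_le_pos; nra).
      replace (/ a * 1) with (/ a) by ring. lra.
    + eapply Bnd_mono; [apply (stepB x y z 0 U0 (960 * D) (12 * / a) (4 * (C + 1) * a) (8 * D * a)); auto; lra|].
      simpl INR. simpl pow.
      assert (0 <= D * / a) by (apply Rmult_le_pos; lra).
      assert (D * a <= D * / a) by (apply Rmult_le_compat_l; lra).
      nra.
  - destruct (IH ltac:(lia)) as (U & V & hU & hV & HB).
    set (N := 3 * INR (S k + 4)).
    assert (N0 : 0 <= N) by (unfold N; apply Rmult_le_pos; [lra|apply pos_INR]).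
    exists (12 * V + 4 * (C + 1) * N * U), (N * (12 * V + 8 * U + 8 * U * C + 4 * (C + 1) * V)).
    assert (0 <= (C + 1) * N * U) by (apply Rmult_le_pos; [apply Rmult_le_pos|]; lra).
    assert (0 <= U * C) by (apply Rmult_le_pos; lra).
    assert (0 <= (C + 1) * V) by (apply Rmult_le_pos; lra).
    split; [lra|]. split; [apply Rmult_le_pos; lra|].
    intros x y z a D Hg. destruct (HB x y z a D Hg) as [BA BB].
    destruct Hg as (ha & ha1 & hD & hDC & h0 & h1 & h2 & h3 & h4 & h5).
    assert (ia1 : 1 <= / a) by (rewrite <- Rinv_1; apply Rinv_le_contravar; lra).
    assert (aia : a * / a = 1) by (field; lra).
    set (p := (/ a) ^ S k) in *.
    assert (p1 : 1 <= p) by (unfold p; apply pow_R1_Rle; lra).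
    assert (pe : (/ a) ^ S (S k) = / a * p) by (unfold p; simpl; ring).
    rewrite pe.
    assert (ap : a * p <= / a * p) by (apply Rmult_le_compat_r; lra).
    assert (al0 : 0 <= U * (a + D * p)) by (apply Rmult_le_pos; [lra|]; assert (0 <= D * p) by (apply Rmult_le_pos; lra); lra).
    assert (be0 : 0 <= V * D * p) by (apply Rmult_le_pos; [apply Rmult_le_pos|]; lra).
    split.
    + eapply Bnd_mono; [apply (stepA x y z (S k) (U * (a + D * p)) (V * D * p) (12 * / a) (4 * (C + 1) * a)); eauto; lra|].
      fold N.
      assert (e1 : 12 * / a * (V * D * p) = 12 * V * (D * (/ a * p))) by ring.
      assert (e2 : 4 * (C + 1) * a * (N * (U * (a + D * p))) =
                   (4 * (C + 1) * N * U) * (a * a) + (4 * (C + 1) * N * U) * (D * (a * p))) by ring.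
      rewrite e1, e2.
      assert (K0 : 0 <= 4 * (C + 1) * N * U) by (apply Rmult_le_pos; [apply Rmult_le_pos|]; nra).
      assert (t1 : (4 * (C + 1) * N * U) * (a * a) <= (4 * (C + 1) * N * U) * a)
        by (apply Rmult_le_compat_l; nra).
      assert (t2 : (4 * (C + 1) * N * U) * (D * (a * p)) <= (4 * (C + 1) * N * U) * (D * (/ a * p)))
        by (apply Rmult_le_compat_l; [auto|]; apply Rmult_le_compat_l; lra).
      assert (e3 : (12 * V + 4 * (C + 1) * N * U) * (a + D * (/ a * p)) =
        12 * V * (D * (/ a * p)) + 12 * V * a + (4 * (C + 1) * N * U) * a + (4 * (C + 1) * N * U) * (D * (/ a * p))) by ring.
      rewrite e3.
      assert (0 <= 12 * V * a) by nra.
      lra.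
    + eapply Bnd_mono; [apply (stepB x y z (S k) (U * (a + D * p)) (V * D * p) (12 * / a) (4 * (C + 1) * a) (8 * D * a)); eauto; lra|].
      fold N.
      replace (N * (12 * V + 8 * U + 8 * U * C + 4 * (C + 1) * V) * D * (/ a * p)) with
        (N * ((12 * V + 8 * U + 8 * U * C + 4 * (C + 1) * V) * D * (/ a * p))) by ring.
      apply Rmult_le_compat_l; [auto|].
      set (q := / a * p) in *.
      assert (q1 : 1 <= q) by (unfold q; nra).
      assert (e1 : 12 * / a * (V * D * p) = 12 * V * (D * q)) by (unfold q; ring).
      assert (e2 : 8 * D * a * (U * (a + D * p)) = 8 * U * (D * (a * a)) + 8 * U * (D * (D * (a * p)))) by ring.
      assert (e3 : 4 * (C + 1) * a * (V * D * p) = 4 * (C + 1) * V * (D * (a * p))) by ring.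
      rewrite e1, e2, e3.
      assert (Dq : 0 <= D * q) by (apply Rmult_le_pos; lra).
      assert (t1 : D * (a * a) <= D * q) by (apply Rmult_le_compat_l; nra).
      assert (t2 : D * (D * (a * p)) <= C * (D * q)).
      { assert (D * (a * p) <= D * q) by (apply Rmult_le_compat_l; lra).
        assert (0 <= D * (a * p)) by (apply Rmult_le_pos; [lra|]; apply Rmult_le_pos; lra).
        nra. }
      assert (t3 : D * (a * p) <= D * q) by (apply Rmult_le_compat_l; lra).
      assert (e4 : (12 * V + 8 * U + 8 * U * C + 4 * (C + 1) * V) * D * q =
        12 * V * (D * q) + 8 * U * (D * q) + 8 * U * (C * (D * q)) + 4 * (C + 1) * V * (D * q)) by ring.
      rewrite e4.
      assert (8 * U * (D * (a * a)) <= 8 * U * (D * q)) by (apply Rmult_le_compat_l; lra).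
      assert (8 * U * (D * (D * (a * p))) <= 8 * U * (C * (D * q))) by (apply Rmult_le_compat_l; lra).
      assert (4 * (C + 1) * V * (D * (a * p)) <= 4 * (C + 1) * V * (D * q)) by (apply Rmult_le_compat_l; nra).
      lra.
Qed.


Lemma good_of a b c d C : 0 < a -> a <= 1 -> 1/2 <= b <= 2 -> 1/2 <= c <= 2 ->
  d = Rabs (b * b - c * c) -> d <= C * (a * a) -> 0 <= C ->
  good C (c / (a * b)) (b / (a * c)) (a / (b * c)) a (d * (/ a * / a)).
Proof.
  intros ha ha1 hb hc hd hdC hC.
  set (ia := / a). set (ib := / b). set (ic := / c).
  assert (aia : a * ia = 1) by (unfold ia; field; lra).
  assert (bib : b * ib = 1) by (unfold ib; field; lra).
  assert (cic : c * ic = 1) by (unfold ic; field; lra).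
  assert (ia1 : 1 <= ia) by (unfold ia; rewrite <- Rinv_1; apply Rinv_le_contravar; lra).
  assert (ib2 : 0 < ib <= 2) by (unfold ib; split; [apply Rinv_0_lt_compat; lra|];
    replace 2 with (/ (1/2)) by field; apply Rinv_le_contravar; lra).
  assert (ic2 : 0 < ic <= 2) by (unfold ic; split; [apply Rinv_0_lt_compat; lra|];
    replace 2 with (/ (1/2)) by field; apply Rinv_le_contravar; lra).
  assert (ex : c / (a * b) = c * ia * ib) by (unfold ia, ib; field; lra).
  assert (ey : b / (a * c) = b * ia * ic) by (unfold ia, ic; field; lra).
  assert (ez : a / (b * c) = a * ib * ic) by (unfold ib, ic; field; lra).
  rewrite ex, ey, ez.
  set (x := c * ia * ib). set (y := b * ia * ic). set (z := a * ib * ic).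
  set (D := d * (ia * ia)).
  assert (d0 : 0 <= d) by (rewrite hd; apply Rabs_pos).
  assert (hx : 0 <= x <= 4 * ia).
  { unfold x. split; [apply Rmult_le_pos; [apply Rmult_le_pos|]; lra|].
    assert (c * ia <= 2 * ia) by (apply Rmult_le_compat_r; lra).
    assert (0 <= c * ia) by (apply Rmult_le_pos; lra). nra. }
  assert (hy : 0 <= y <= 4 * ia).
  { unfold y. split; [apply Rmult_le_pos; [apply Rmult_le_pos|]; lra|].
    assert (b * ia <= 2 * ia) by (apply Rmult_le_compat_r; lra).
    assert (0 <= b * ia) by (apply Rmult_le_pos; lra). nra. }
  assert (hz : 0 <= z <= 4 * a).
  { unfold z. split; [apply Rmult_le_pos; [apply Rmult_le_pos|]; lra|].
    assert (a * ib <= a * 2) by (apply Rmult_le_compat_l; lra).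
    assert (0 <= a * ib) by (apply Rmult_le_pos; lra). nra. }
  assert (hz2 : 4 * a <= 4 * ia) by nra.
  assert (exy : x - y = (c * c - b * b) * ia * ib * ic).
  { unfold x, y, ia, ib, ic. field. lra. }
  assert (hD : 0 <= D) by (unfold D; apply Rmult_le_pos; nra).
  assert (hDC : D <= C).
  { unfold D. replace C with (C * (a * a) * (ia * ia)).
    - apply Rmult_le_compat_r; nra.
    - replace (C * (a * a) * (ia * ia)) with (C * ((a * ia) * (a * ia))) by ring. rewrite aia. ring. }
  assert (hxy : Rabs (x - y) <= 4 * D * a).
  { rewrite exy. rewrite !Rabs_mult. rewrite Rabs_minus_sym, <- hd.
    rewrite (Rabs_pos_eq ia), (Rabs_pos_eq ib), (Rabs_pos_eq ic) by lra.
    assert (e : 4 * D * a = d * ia * 4 * (a * ia)) by (unfold D; ring). rewrite e, aia.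
    assert (0 <= d * ia) by (apply Rmult_le_pos; lra).
    assert (ib * ic <= 4) by nra. nra. }
  assert (Da : 0 <= D * a) by (apply Rmult_le_pos; lra).
  unfold good. split; [auto|]. split; [auto|]. split; [auto|]. split; [auto|].
  unfold cf, S0, S1.
  rewrite (Rabs_pos_eq x), (Rabs_pos_eq y), (Rabs_pos_eq z) by lra.
  split; [|split; [|split; [|split; [|split]]]].
  - unfold Rminus. eapply Rle_trans; [apply tri3|]. rewrite Rabs_Ropp, !Rabs_pos_eq by lra. unfold ia in *. lra.
  - eapply Rle_trans; [apply Rabs_triang|]. rewrite (Rabs_pos_eq z) by lra.
    assert (D * a <= C * a) by (apply Rmult_le_compat_r; lra). lra.
  - replace (x - y - z) with ((x - y) + - z) by ring. eapply Rle_trans; [apply Rabs_triang|]. rewrite Rabs_Ropp, (Rabs_pos_eq z) by lra.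
    assert (D * a <= C * a) by (apply Rmult_le_compat_r; lra). lra.
  - replace (x - y + z + (x - y - z)) with (2 * (x - y)) by ring.
    rewrite Rabs_mult, Rabs_pos_eq by lra. lra.
  - assert (exz : x * z = ib * ib) by (unfold x, z; replace (c * ia * ib * (a * ib * ic)) with ((a * ia) * (c * ic) * ib * ib) by ring; rewrite aia, cic; ring).
    assert (eyz : y * z = ic * ic) by (unfold y, z; replace (b * ia * ic * (a * ib * ic)) with ((a * ia) * (b * ib) * ic * ic) by ring; rewrite aia, bib; ring).
    rewrite exz, eyz. rewrite (Rabs_pos_eq (ib * ib)), (Rabs_pos_eq (ic * ic)) by nra.
    assert (t : Rabs (x - y) * (x + y + z) <= 4 * D * a * (12 * ia)).
    { apply Rmult_le_compat; [apply Rabs_pos|lra|auto|lra]. }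
    assert (e : 4 * D * a * (12 * ia) = 48 * D) by (replace (4 * D * a * (12 * ia)) with (48 * D * (a * ia)) by ring; rewrite aia; ring).
    rewrite e in t. nra.
  - assert (t : Rabs (x - y) * (x + y + z) <= 4 * D * a * (12 * ia)).
    { apply Rmult_le_compat; [apply Rabs_pos|lra|auto|lra]. }
    assert (e : 4 * D * a * (12 * ia) = 48 * D) by (replace (4 * D * a * (12 * ia)) with (48 * D * (a * ia)) by ring; rewrite aia; ring).
    lra.
Qed.


Lemma idx_len k ws : In ws (idx_lists k) -> length ws = k.
Proof.
  revert ws; induction k as [|k IH]; intros ws H; simpl in H.
  - destruct H as [<-|[]]; reflexivity.
  - apply in_flat_map in H. destruct H as [ws0 [H0 H1]].
    simpl in H1. destruct H1 as [<-|[<-|[<-|[]]]]; simpl; f_equal; auto.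
Qed.

Lemma sumL_bnd l f M : (forall ws, In ws l -> f ws <= M) -> sumL l f <= INR (length l) * M.
Proof.
  induction l as [|w l IH]; intros H.
  - simpl. lra.
  - change (sumL (w::l) f) with (f w + sumL l f). change (length (w::l)) with (S (length l)). rewrite S_INR. assert (h1 := H w (or_introl eq_refl)).
    assert (h2 : sumL l f <= INR (length l) * M) by (apply IH; intros; apply H; right; auto).
    lra.
Qed.

Lemma sq_bnd r al : Rabs r <= al -> r ^ 2 <= al * al.
Proof. intros H. simpl. rewrite Rmult_1_r. revert H. unfold Rabs; destruct Rcase_abs; intros; nra.
Qed.

Lemma norm_bnd e l1 l2 k al : 0 <= al ->
  (forall ws a b p q, length ws = k -> Rabs (Rmk e l1 l2 k ws a b p q) <= al) ->
  Rmk_norm e l1 l2 k <= sqrt (INR (length (idx_lists k)) * 27) * al.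
Proof.
  intros hal H. unfold Rmk_norm.
  assert (hs : sumL (idx_lists k) (fun ws => sum_wedge (fun a b => sum3 (fun p => sum3 (fun q =>
      (Rmk e l1 l2 k ws a b p q) ^ 2)))) <= INR (length (idx_lists k)) * (27 * (al * al))).
  { apply sumL_bnd. intros ws Hws. apply idx_len in Hws.
    unfold sum_wedge, sum3. repeat match goal with |- context [Rmk e l1 l2 k ws ?a ?b ?p ?q ^ 2] =>
      let h := fresh "h" in assert (h := sq_bnd _ _ (H ws a b p q Hws)); 
      set (Rmk e l1 l2 k ws a b p q ^ 2) in * end.
    lra. }
  eapply Rle_trans; [apply sqrt_le_1_alt; exact hs|].
  replace (INR (length (idx_lists k)) * (27 * (al * al))) with ((INR (length (idx_lists k)) * 27) * (al * al)) by ring.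
  rewrite sqrt_mult, sqrt_square; auto; try lra.
  - apply Rmult_le_pos; [apply pos_INR|lra].
  - nra.
Qed.

Lemma rpow_eq e k : 0 < e -> Rpower e (- (INR k + 2) / 2) = (/ sqrt e) ^ (k + 2).
Proof.
  intros he. assert (hs : 0 < sqrt e) by (apply sqrt_lt_R0; auto).
  rewrite <- Rpower_pow by (apply Rinv_0_lt_compat; auto).
  unfold Rpower. f_equal. rewrite ln_Rinv by auto.
  assert (hl : ln e = 2 * ln (sqrt e)).
  { rewrite <- (sqrt_sqrt e) at 1 by lra. rewrite ln_mult by auto. ring. }
  rewrite hl, plus_INR. simpl INR. field.
Qed.

Lemma fin_max (f : nat -> R) N : exists M, 0 <= M /\ forall n, (n < N)%nat -> f n <= M.
Proof.
  induction N as [|N [M [hM IH]]].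
  - exists 0. split; [lra|]. intros; lia.
  - exists (Rmax M (f N)). split; [eapply Rle_trans; [apply hM|apply Rmax_l]|].
    intros n Hn. destruct (Nat.eq_dec n N) as [->|Hne]; [apply Rmax_r|].
    eapply Rle_trans; [apply IH; lia|apply Rmax_l].
Qed.


Theorem proposition4p4 (eps l1 l2 : nat -> R) :
  almost_Berger eps l1 l2 ->
  reg_ge eps l1 l2 2%Z ->
  forall k : nat, (1 <= k)%nat ->
  exists L : R, 0 < L /\
    forall n : nat,
      Rmk_norm (eps n) (l1 n) (l2 n) k
      <= L * (sqrt (eps n)
              + Rpower (eps n) (- (INR k + 2) / 2) * Rabs (l1 n - l2 n)).
Proof.
  intros [Hpos [He [H1 [H2 [C [HC HCb]]]]]] _ k Hk.
  destruct (He 1 ltac:(lra)) as [Na HNa].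
  destruct (H1 (1/2) ltac:(lra)) as [Nb HNb].
  destruct (H2 (1/2) ltac:(lra)) as [Nc HNc].
  set (N0 := (Na + Nb + Nc)%nat).
  destruct (main_k C ltac:(lra) k Hk) as (U & V & hU & hV & HM).
  set (Kn := sqrt (INR (length (idx_lists k)) * 27)).
  assert (hKn : 0 <= Kn) by apply sqrt_pos.
  destruct (fin_max (fun n => Rmk_norm (eps n) (l1 n) (l2 n) k / sqrt (eps n)) N0) as [M [hM HMb]].
  exists (Kn * U + M + 1). split.
  { assert (0 <= Kn * U) by (apply Rmult_le_pos; auto). lra. }
  intros n.
  destruct (Hpos n) as (he & hl1 & hl2).
  assert (hs : 0 < sqrt (eps n)) by (apply sqrt_lt_R0; auto).
  assert (hP : 0 <= Rpower (eps n) (- (INR k + 2) / 2) * Rabs (l1 n - l2 n)).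
  { apply Rmult_le_pos; [unfold Rpower; left; apply exp_pos|apply Rabs_pos]. }
  assert (hKU : 0 <= Kn * U) by (apply Rmult_le_pos; auto).
  destruct (le_lt_dec N0 n) as [hn|hn].
  -
    assert (ea : eps n < 1).
    { assert (h := HNa n ltac:(unfold N0 in hn; lia)). unfold R_dist in h.
      rewrite Rminus_0_r, Rabs_pos_eq in h; lra. }
    assert (eb : Rabs (l1 n - 1) < 1/2) by (apply (HNb n); unfold N0 in hn; lia).
    assert (ec : Rabs (l2 n - 1) < 1/2) by (apply (HNc n); unfold N0 in hn; lia).
    apply Rabs_def2 in eb. apply Rabs_def2 in ec.
    set (a := sqrt (eps n)). set (b := sqrt (l1 n)). set (c := sqrt (l2 n)).
    assert (ha1 : a <= 1) by (unfold a; rewrite <- sqrt_1; apply sqrt_le_1_alt; lra).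
    assert (bb : b * b = l1 n) by (apply sqrt_sqrt; lra).
    assert (cc : c * c = l2 n) by (apply sqrt_sqrt; lra).
    assert (aa : a * a = eps n) by (apply sqrt_sqrt; lra).
    assert (b0 : 0 <= b) by apply sqrt_pos. assert (c0 : 0 <= c) by apply sqrt_pos.
    assert (hb : 1/2 <= b <= 2) by nra.
    assert (hc : 1/2 <= c <= 2) by nra.
    set (d := Rabs (l1 n - l2 n)).
    assert (Hg := good_of a b c d C hs ha1 hb hc ltac:(unfold d; rewrite bb, cc; reflexivity)
                    ltac:(unfold d; rewrite aa; apply HCb) ltac:(lra)).
    destruct (HM _ _ _ _ _ Hg) as [BA _].
    set (al := U * (a + d * (/ a * / a) * (/ a) ^ k)).
    assert (hal : 0 <= al).
    { unfold al. apply Rmult_le_pos; auto.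
      assert (0 <= d * (/ a * / a) * (/ a) ^ k); [|assert (0 < a) by (unfold a; auto); lra].
      apply Rmult_le_pos; [apply Rmult_le_pos; [unfold d; apply Rabs_pos|]|apply pow_le];
        left; try apply Rmult_lt_0_compat; apply Rinv_0_lt_compat; auto. }
    assert (Hn : Rmk_norm (eps n) (l1 n) (l2 n) k <= Kn * al).
    { apply norm_bnd; auto. intros ws a0 b1 p q Hws.
      rewrite Rmk_Fk by auto. apply BA. rewrite length_app. simpl. lia. }
    assert (e : al = U * (sqrt (eps n) + Rpower (eps n) (- (INR k + 2) / 2) * Rabs (l1 n - l2 n))).
    { unfold al. rewrite rpow_eq by auto. fold a d. f_equal. f_equal.
      rewrite pow_add. simpl. ring. }
    rewrite e, <- Rmult_assoc in Hn.
    eapply Rle_trans; [apply Hn|]. apply Rmult_le_compat_r; [apply Rplus_le_le_0_compat; [left; apply sqrt_lt_R0; auto | apply Rmult_le_pos; [unfold Rpower; left; apply exp_pos|apply Rabs_pos]]|].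
    lra.
  -
    assert (h := HMb n hn). simpl in h.
    assert (Rmk_norm (eps n) (l1 n) (l2 n) k <= M * sqrt (eps n)).
    { apply (Rmult_le_compat_r (sqrt (eps n))) in h; [|lra].
      unfold Rdiv in h. rewrite Rmult_assoc, Rinv_l, Rmult_1_r in h by lra. auto. }
    assert (M * sqrt (eps n) <= (Kn * U + M + 1) * (sqrt (eps n) + Rpower (eps n) (- (INR k + 2) / 2) * Rabs (l1 n - l2 n))).
    { assert (0 <= (Kn * U + M + 1) * (Rpower (eps n) (- (INR k + 2) / 2) * Rabs (l1 n - l2 n))) by
        (apply Rmult_le_pos; lra).
      assert (0 <= (Kn * U + 1) * sqrt (eps n)) by (apply Rmult_le_pos; lra).
      nra. }
    lra.
Qed.
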